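(* Let $z,x,y\in[0,1]$ satisfy $z=x+y$, and write their concise binary expansions as $z=(z_0.z_1z_2\ldots)_2$, $x=(x_0.x_1x_2\ldots)_2$, $y=(y_0.y_1y_2\ldots)_2$. Suppose $0\le \ell<\ell'$ are indices such that $z_\ell=1$, $z_{\ell'}=1$, and $z_j=0$ for all $\ell+1\le j\le \ell'-1$. Then the bit pairs $(x_j,y_j)$ for $\ell\le j\le \ell'$ satisfy exactly one of the following three patterns: (1) $(x_\ell,y_\ell)\in\{(0,1),(1,0)\}$, $(x_j,y_j)=(0,0)$ for all $\ell<j<\ell'$, and $(x_{\ell'},y_{\ell'})\in\{(0,0),(0,1),(1,0)\}$; (2) $(x_\ell,y_\ell)\in\{(0,0),(1,1)\}$, $(x_j,y_j)\in\{(0,1),(1,0)\}$ for all $\ell<j<\ell'$, and $(x_{\ell'},y_{\ell'})=(1,1)$; (3) $(x_\ell,y_\ell)\in\{(0,0),(1,1)\}$, and there are integers $k_1,k_2\ge 0$ with $k_1+k_2=\ell'-\ell-2$ such that $(x_j,y_j)\in\{(0,1),(1,0)\}$ for $\ell<j\le \ell+k_1$, $(x_{\ell+k_1+1},y_{\ell+k_1+1})=(1,1)$, $(x_j,y_j)=(0,0)$ for $\ell+k_1+1<j<\ell'$, and $(x_{\ell'},y_{\ell'})\in\{(0,0),(0,1),(1,0)\}$.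
   Context: A concise binary expansion of a real number is a binary representation $(z_0.z_1z_2\ldots)_2=\sum_{i\ge0} z_i2^{-i}$ with $z_i\in\{0,1\}$ that does not end in an infinite string of 1s. *)

(* Defs.v *)
From Stdlib Require Import Reals Lra Lia.
From Coquelicot Require Import Coquelicot.
Open Scope R_scope.

Definition bitR (b : bool) : R := if b then 1 else 0.

Definition concise_binary (b : nat -> bool) (x : R) : Prop :=
  is_series (fun i => bitR (b i) / 2 ^ i) x /\
  ~ (exists N : nat, forall n : nat, (N <= n)%nat -> b n = true).

Definition exactly_one3 (P Q S : Prop) : Prop :=
  (P /\ ~ Q /\ ~ S) \/ (~ P /\ Q /\ ~ S) \/ (~ P /\ ~ Q /\ S).

(* Main.v *)
Require Import Defs.
From Stdlib Require Import Reals Lra Lia Classical.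
From Coquelicot Require Import Coquelicot.
Open Scope R_scope.

Definition geo (k : nat) : R := / 2 * (/ 2) ^ k.

Lemma geo_series : is_series geo 1.
Proof.
  assert (H := is_series_geom (/2)).
  rewrite Rabs_pos_eq in H by lra.
  specialize (H ltac:(lra)).
  apply (is_series_scal_l (/2)) in H.
  replace 1 with (scal (/2) (/ (1 - /2))).
  - eapply is_series_ext; [|exact H]. intros n; reflexivity.
  - unfold scal; simpl; unfold mult; simpl. field.
Qed.

Definition tl (b : nat -> bool) (m : nat) : R :=
  Series (fun k => bitR (b (m + k)%nat) / 2 ^ (k + 1)).

Lemma term_bound (b : nat -> bool) m k :
  0 <= bitR (b (m + k)%nat) / 2 ^ (k + 1) <= geo k.
Proof.
  unfold geo. rewrite <- Rinv_pow by lra.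
  rewrite pow_add. simpl pow.
  assert (0 < 2 ^ k) by (apply pow_lt; lra).
  destruct (b (m+k)%nat); simpl bitR; split.
  - apply Rlt_le, Rdiv_lt_0_compat; nra.
  - right. field. lra.
  - unfold Rdiv; rewrite Rmult_0_l; lra.
  - unfold Rdiv; rewrite Rmult_0_l. left. apply Rmult_lt_0_compat.
    apply Rinv_0_lt_compat; lra. apply Rinv_0_lt_compat; lra.
Qed.

Lemma tl_ex (b : nat -> bool) m : ex_series (fun k => bitR (b (m + k)%nat) / 2 ^ (k + 1)).
Proof.
  apply (@ex_series_le R_AbsRing R_CompleteNormedModule _ geo).
  - intros n. unfold norm; simpl; unfold abs; simpl.
    destruct (term_bound b m n). rewrite Rabs_pos_eq; lra.
  - exists 1. apply geo_series.
Qed.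

Lemma tl_bounds b m : 0 <= tl b m <= 1.
Proof.
  split.
  - unfold tl.
    assert (E : Series (fun n => 0 * geo n) = 0) by (rewrite Series_scal_l; ring).
    rewrite <- E. apply Series_le. intros n; rewrite Rmult_0_l; split; [lra|apply term_bound].
    apply tl_ex.
  - unfold tl. rewrite <- (is_series_unique _ _ geo_series).
    apply Series_le. intros n; apply term_bound. exists 1; apply geo_series.
Qed.

Lemma tl_rec b m : tl b m = (bitR (b m) + tl b (S m)) / 2.
Proof.
  unfold tl. rewrite Series_incr_1 by apply tl_ex.
  rewrite Nat.add_0_r. simpl pow.
  replace (Series (fun k => bitR (b (m + S k)%nat) / (2 * 2 ^ (k + 1))))
    with (/2 * Series (fun k => bitR (b (S m + k)%nat) / 2 ^ (k + 1))).
  - field.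
  - rewrite <- Series_scal_l. apply Series_ext. intros n.
    replace (m + S n)%nat with (S m + n)%nat by lia.
    field. apply pow_nonzero; lra.
Qed.

Lemma tl0 b x : concise_binary b x -> tl b 0 = x / 2.
Proof.
  intros [H _]. unfold tl.
  apply is_series_unique.
  apply (is_series_scal_l (/2)) in H.
  replace (x/2) with (scal (/2) x) by (unfold scal; simpl; unfold mult; simpl; field).
  eapply is_series_ext; [|exact H]. intros n; simpl.
  unfold scal; simpl; unfold mult; simpl.
  rewrite Nat.add_1_r. simpl pow. field. apply pow_nonzero; lra.
Qed.

Lemma tl_lt1 b x : concise_binary b x -> forall m, tl b m < 1.
Proof.
  intros [_ Hc] m.
  assert (Hf : exists n, (m <= n)%nat /\ b n = false).
  { apply NNPP; intro Hn. apply Hc. exists m. intros n Hmn.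
    destruct (b n) eqn:E; auto. exfalso; apply Hn; eauto. }
  destruct Hf as [n [Hmn Hbn]].
  replace n with (m + (n - m))%nat in Hbn by lia.
  remember (n - m)%nat as d. clear Heqd Hmn.
  revert m Hbn. induction d as [|d IH]; intros m Hbn.
  - rewrite tl_rec. rewrite Nat.add_0_r in Hbn. rewrite Hbn. simpl bitR.
    pose proof (tl_bounds b (S m)). lra.
  - rewrite tl_rec. pose proof (tl_bounds b (S m)).
    assert (tl b (S m) < 1) by (apply IH; rewrite <- Hbn; f_equal; lia).
    destruct (b m); simpl bitR; lra.
Qed.

Definition maj (a b c : bool) := orb (orb (andb a b) (andb a c)) (andb b c).
Definition xor3 (a b c : bool) := xorb (xorb a b) c.

Lemma bool_rel (a b cz cm cs : bool) :
  2 * bitR cm = bitR a + bitR b + bitR cs - bitR cz ->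
  cm = maj a b cs /\ cz = xor3 a b cs.
Proof.
  destruct a, b, cz, cm, cs; simpl; intros H; split; try reflexivity; exfalso; lra.
Qed.

Lemma carries (z x y : R) (xb yb zb : nat -> bool) :
  z = x + y -> concise_binary zb z -> concise_binary xb x -> concise_binary yb y ->
  exists c : nat -> bool, forall m,
    c m = maj (xb m) (yb m) (c (S m)) /\ zb m = xor3 (xb m) (yb m) (c (S m)).
Proof.
  intros Hz Cz Cx Cy.
  set (E m := tl xb m + tl yb m - tl zb m).
  assert (E0 : E 0%nat = 0).
  { unfold E. rewrite (tl0 _ _ Cz), (tl0 _ _ Cx), (tl0 _ _ Cy). subst; lra. }
  assert (Erec : forall m, 2 * E m = bitR (xb m) + bitR (yb m) + E (S m) - bitR (zb m)).
  { intros m. unfold E. rewrite (tl_rec xb m), (tl_rec yb m), (tl_rec zb m). lra. }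
  assert (Eb : forall m, -1 < E m < 2).
  { intros m. unfold E. pose proof (tl_bounds xb m). pose proof (tl_bounds yb m).
    pose proof (tl_bounds zb m). pose proof (tl_lt1 _ _ Cx m).
    pose proof (tl_lt1 _ _ Cy m). pose proof (tl_lt1 _ _ Cz m). lra. }
  assert (E01 : forall m, E m = 0 \/ E m = 1).
  { induction m as [|m IH]. left; exact E0.
    pose proof (Erec m). pose proof (Eb (S m)).
    destruct (xb m), (yb m), (zb m); simpl bitR in *; destruct IH; lra. }
  exists (fun m => if Rle_dec 1 (E m) then true else false).
  assert (Ec : forall m, E m = bitR (if Rle_dec 1 (E m) then true else false)).
  { intros m. destruct (Rle_dec 1 (E m)); simpl; destruct (E01 m); lra. }
  intros m. apply bool_rel. rewrite <- !Ec. rewrite Erec. ring.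
Qed.

Section Comb.
Variables (xb yb zb c : nat -> bool).
Hypothesis Hrel : forall m,
    c m = maj (xb m) (yb m) (c (S m)) /\ zb m = xor3 (xb m) (yb m) (c (S m)).

Definition oo j := (xb j, yb j) = (false, true) \/ (xb j, yb j) = (true, false).
Definition zz j := (xb j, yb j) = (false, false).
Definition tt j := (xb j, yb j) = (true, true).

Lemma seg (l n : nat) :
  (forall j, (l < j <= l + n)%nat -> zb j = false) ->
  (c (l + n + 1)%nat = true -> c (l + 1)%nat = true /\
     forall j, (l < j <= l + n)%nat -> oo j) /\
  (c (l + n + 1)%nat = false ->
     (c (l + 1)%nat = false /\ forall j, (l < j <= l + n)%nat -> zz j) \/
     (c (l + 1)%nat = true /\ exists k1 k2, (k1 + k2 + 1 = n)%nat /\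
        (forall j, (l < j <= l + k1)%nat -> oo j) /\ tt (l + k1 + 1)%nat /\
        (forall j, (l + k1 + 1 < j <= l + n)%nat -> zz j))).
Proof.
  induction n as [|n IH]; intros Hz.
  - rewrite Nat.add_0_r. split; intros Hc.
    + split; auto. intros j Hj; lia.
    + left; split; auto. intros j Hj; lia.
  - destruct IH as [IHt IHf].
    { intros j Hj; apply Hz; lia. }
    replace (l + S n + 1)%nat with (S (l + S n)) by lia.
    replace (l + n + 1)%nat with (l + S n)%nat in IHt, IHf by lia.
    set (p := (l + S n)%nat) in *.
    assert (Hzp : zb p = false) by (apply Hz; unfold p; lia).
    destruct (Hrel p) as [Hcp Hzp'].
    unfold oo, zz, tt, maj, xor3 in *.
    split; intros Hc; rewrite Hc in Hcp, Hzp';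
      destruct (xb p) eqn:Ex, (yb p) eqn:Ey; simpl in Hcp, Hzp'; try congruence.
    + destruct (IHt Hcp) as [H1 H2]. split; auto.
      intros j Hj. destruct (Nat.eq_dec j p) as [->|Hne]; [rewrite Ex, Ey; auto|].
      apply H2; unfold p in *; lia.
    + destruct (IHt Hcp) as [H1 H2]. split; auto.
      intros j Hj. destruct (Nat.eq_dec j p) as [->|Hne]; [rewrite Ex, Ey; auto|].
      apply H2; unfold p in *; lia.
    + (* (1,1) at p *)
      destruct (IHt Hcp) as [H1 H2]. right. split; auto.
      exists n, 0%nat. split; [lia|]. split; [exact H2|]. split.
      * replace (l + n + 1)%nat with p by (unfold p; lia). rewrite Ex, Ey; auto.
      * intros j Hj; unfold p in *; lia.
    + destruct (IHf Hcp) as [[H1 H2]|[H1 [k1 [k2 [Hk [H2 [H3 H4]]]]]]].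
      * left. split; auto. intros j Hj.
        destruct (Nat.eq_dec j p) as [->|Hne]; [rewrite Ex, Ey; auto|].
        apply H2; unfold p in *; lia.
      * right. split; auto. exists k1, (S k2). split; [lia|].
        split; auto. split; auto. intros j Hj.
        destruct (Nat.eq_dec j p) as [->|Hne]; [rewrite Ex, Ey; auto|].
        apply H4; unfold p in *; lia.
Qed.
End Comb.

Theorem theorem4p4 (z x y : R) (xb yb zb : nat -> bool) (l l' : nat) :
  0 <= z <= 1 -> 0 <= x <= 1 -> 0 <= y <= 1 -> z = x + y ->
  concise_binary zb z -> concise_binary xb x -> concise_binary yb y ->
  (l < l')%nat -> zb l = true -> zb l' = true ->
  (forall j : nat, (l + 1 <= j <= l' - 1)%nat -> zb j = false) ->
  exactly_one3
    (* pattern (1) *)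
    (((xb l, yb l) = (false, true) \/ (xb l, yb l) = (true, false)) /\
     (forall j : nat, (l < j < l')%nat -> (xb j, yb j) = (false, false)) /\
     ((xb l', yb l') = (false, false) \/ (xb l', yb l') = (false, true) \/
      (xb l', yb l') = (true, false)))
    (* pattern (2) *)
    (((xb l, yb l) = (false, false) \/ (xb l, yb l) = (true, true)) /\
     (forall j : nat, (l < j < l')%nat ->
        (xb j, yb j) = (false, true) \/ (xb j, yb j) = (true, false)) /\
     (xb l', yb l') = (true, true))
    (* pattern (3) *)
    (((xb l, yb l) = (false, false) \/ (xb l, yb l) = (true, true)) /\
     exists k1 k2 : nat, (l + k1 + k2 + 2 = l')%nat /\
       (forall j : nat, (l < j <= l + k1)%nat ->
          (xb j, yb j) = (false, true) \/ (xb j, yb j) = (true, false)) /\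
       (xb (l + k1 + 1)%nat, yb (l + k1 + 1)%nat) = (true, true) /\
       (forall j : nat, (l + k1 + 1 < j < l')%nat -> (xb j, yb j) = (false, false)) /\
       ((xb l', yb l') = (false, false) \/ (xb l', yb l') = (false, true) \/
        (xb l', yb l') = (true, false))).
Proof.
  intros _ _ _ Hz Cz Cx Cy Hll Hzl Hzl' Hmid.
  destruct (carries z x y xb yb zb Hz Cz Cx Cy) as [c Hrel].
  set (n := (l' - l - 1)%nat).
  assert (Hn : (l + n + 1 = l')%nat) by (unfold n; lia).
  destruct (seg xb yb zb c Hrel l n) as [St Sf].
  { intros j Hj. apply Hmid. unfold n in *; lia. }
  rewrite Hn in St, Sf.
  destruct (Hrel l) as [Hcl Hzl2]. destruct (Hrel l') as [Hcl' Hzl2'].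
  replace (S l) with (l + 1)%nat in Hcl, Hzl2 by lia.
  unfold oo, zz, tt, maj, xor3 in *.
  unfold exactly_one3.
  destruct (c l') eqn:Ecl'.
  -
    destruct (St eq_refl) as [H1 H2].
    rewrite H1 in Hcl, Hzl2.
    rewrite Hzl' in Hzl2'.
    assert (Htt : (xb l', yb l') = (true, true)).
    { destruct (xb l'), (yb l'), (c (S l')); simpl in *; congruence. }
    assert (Hl : (xb l, yb l) = (false, false) \/ (xb l, yb l) = (true, true)).
    { rewrite Hzl in Hzl2. destruct (xb l), (yb l); simpl in *; auto; congruence. }
    right; left. split; [|split].
    + intros [Ha _]. destruct Hl as [Hl|Hl]; destruct Ha as [Ha|Ha]; congruence.
    + split; [exact Hl|]. split; [|exact Htt].
      intros j Hj. apply H2. unfold n; lia.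
    + intros [_ [k1 [k2 [_ [_ [_ [_ Hx]]]]]]].
      destruct Hx as [Hx|[Hx|Hx]]; congruence.
  - destruct (Sf eq_refl) as [[H1 H2]|[H1 [k1 [k2 [Hk [H2 [H3 H4]]]]]]];
    rewrite Hzl' in Hzl2';
    (assert (Hl' : (xb l', yb l') = (false, false) \/ (xb l', yb l') = (false, true) \/
        (xb l', yb l') = (true, false))
     by (destruct (xb l'), (yb l'), (c (S l')); simpl in *; auto; congruence));
    rewrite H1 in Hcl, Hzl2; rewrite Hzl in Hzl2.
    +
      assert (Hl : (xb l, yb l) = (false, true) \/ (xb l, yb l) = (true, false)).
      { destruct (xb l), (yb l); simpl in *; auto; congruence. }
      left. split; [|split].
      * split; [exact Hl|]. split; [|exact Hl'].
        intros j Hj. apply H2. unfold n; lia.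
      * intros [Ha _]. destruct Hl as [Hl|Hl]; destruct Ha as [Ha|Ha]; congruence.
      * intros [Ha _]. destruct Hl as [Hl|Hl]; destruct Ha as [Ha|Ha]; congruence.
    +
      assert (Hl : (xb l, yb l) = (false, false) \/ (xb l, yb l) = (true, true)).
      { destruct (xb l), (yb l); simpl in *; auto; congruence. }
      right; right. split; [|split].
      * intros [Ha _]. destruct Hl as [Hl|Hl]; destruct Ha as [Ha|Ha]; congruence.
      * intros [_ [_ Ht]]. destruct Hl' as [Hx|[Hx|Hx]]; congruence.
      * split; [exact Hl|]. exists k1, k2. split; [unfold n in *; lia|].
        split; [exact H2|]. split; [exact H3|]. split; [|exact Hl'].
        intros j Hj. apply H4. unfold n in *; lia.
Qed.
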